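(* Let $F$ be a weighted graph with edge weight $\omega:E(F)\to\{3,4,5\}$. Assume that $F=T\cup P$, where $T$ is a spanning tree of $F$ all of whose edges have weight $3$ and $P$ is a non-spanning path of weight $\ell$ with end-vertices $x$ and $y$. If $F$ has no cycle of weight $11$ and $P$ has minimal weight among all $x,y$-paths in $F[N^1_F[P]]$, then $|N^1_F[P]|\ge\frac{\ell}{3}+\frac{5}{3}$.
   Context: The weight of a subgraph is the sum of the weights of its edges. $N^1_F[P]$ is the closed neighbourhood of $V(P)$ in $F$: all vertices at distance at most $1$ in $F$ from some vertex of $P$. A path is non-spanning if it does not contain all vertices of $F$. *)

(* Defs.v *)
From mathcomp Require Import all_boot all_order all_algebra.
Set Implicit Arguments. Unset Strict Implicit. Unset Printing Implicit Defensive.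

(* Graphs: a simple graph on a finite vertex type V is a symmetric,
   irreflexive relation [e : rel V].  Weights are a function w : V -> V -> nat
   (only its values on edges matter). *)

Section Graphs.
Variable V : finType.

Definition steps (s : seq V) : seq (V * V) := zip s (behead s).

Definition gpath (e : rel V) (s : seq V) : bool :=
  if s is x :: p then path e x p && uniq s else false.

Definition pweight (w : V -> V -> nat) (s : seq V) : nat :=
  \sum_(pr <- steps s) w pr.1 pr.2.

Definition gcycle (e : rel V) (s : seq V) : bool :=
  (2 < size s) && uniq s && cycle e s.

Definition cweight (w : V -> V -> nat) (s : seq V) : nat :=
  if s is x :: p then pweight w (rcons (x :: p) x) else 0.

Definition pedge (s : seq V) (u v : V) : bool :=
  has (fun pr => ((pr.1 == u) && (pr.2 == v)) || ((pr.1 == v) && (pr.2 == u)))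
      (steps s).

Definition spanning_tree (t : rel V) : Prop :=
  symmetric t /\ (forall u v, connect t u v) /\ (forall c, ~~ gcycle t c).

Definition closed_nbhd (e : rel V) (s : seq V) : {set V} :=
  [set v | has (fun u => (u == v) || e u v) s].

End Graphs.

(* Main.v *)
Require Import Defs.
From mathcomp Require Import all_boot all_order all_algebra zify.
Import Order.TTheory GRing.Theory Num.Theory.

Lemma pw_nil (V : finType) (w : V -> V -> nat) : pweight w [::] = 0.
Proof. by rewrite /pweight /steps /= big_nil. Qed.

Lemma pw_one (V : finType) (w : V -> V -> nat) a : pweight w [:: a] = 0.
Proof. by rewrite /pweight /steps /= big_nil. Qed.

Lemma pw_cons2 (V : finType) (w : V -> V -> nat) a b u :
  pweight w (a :: b :: u) = w a b + pweight w (b :: u).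
Proof. by rewrite /pweight /steps /= big_cons. Qed.

Lemma pw_join (V : finType) (w : V -> V -> nat) a u u' :
  pweight w (a :: u ++ u') = pweight w (a :: u) + pweight w (last a u :: u').
Proof.
elim: u a => [|b u IH] a /=; first by rewrite pw_one.
by rewrite !pw_cons2 IH addnA.
Qed.

Lemma pw_nth (V : finType) (w : V -> V -> nat) d u :
  pweight w u = \sum_(0 <= i < (size u).-1) w (nth d u i) (nth d u i.+1).
Proof.
elim: u => [|a u IH]; first by rewrite pw_nil big_nil.
case: u IH => [|b u] IH /=; first by rewrite pw_one big_nil.
by rewrite pw_cons2 IH big_nat_recl.
Qed.

Lemma pw_range (V : finType) (w : V -> V -> nat) d u m n :
  m <= n -> n < size u ->
  pweight w (take (n - m).+1 (drop m u)) =
  \sum_(m <= i < n) w (nth d u i) (nth d u i.+1).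
Proof.
move=> hmn hn.
rewrite (pw_nth _ w d) size_take size_drop.
have -> : (if (n - m).+1 < size u - m then (n - m).+1 else size u - m).-1 = n - m.
  case: ifP => h /=; lia.
rewrite -[in RHS](add0n m) big_addn.
apply: eq_big_nat => i hi.
rewrite !nth_take; try lia.
by rewrite !nth_drop addnS addnC.
Qed.

Lemma last_take_nth (T : Type) (x : T) p n : n <= size p ->
  last x (take n p) = nth x (x :: p) n.
Proof.
move=> hn; rewrite (last_nth x) size_take.
case: ifP => h.
  case: n hn h => [|n] hn h /=; first done. by rewrite nth_take.
have e : n = size p by move/negbT: h; lia.
by rewrite e take_size.
Qed.

Lemma drop_path_nth (T : Type) (e : rel T) x p n : path e x p -> n <= size p ->
  path e (nth x (x :: p) n) (drop n p).
Proof.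
move=> hp hn; move: hp; rewrite -{1}(cat_take_drop n p) cat_path => /andP[_].
by rewrite last_take_nth.
Qed.

Theorem lemma5p1 (V : finType) (adj : rel V) (w : V -> V -> nat)
    (t : rel V) (x y : V) (p : seq V) (l : nat) :
  symmetric adj -> irreflexive adj ->
  (forall u v, w u v = w v u) ->
  (forall u v, adj u v -> w u v \in [:: 3; 4; 5]) ->
  spanning_tree t ->
  (forall u v, t u v -> w u v = 3) ->
  gpath adj (x :: p) -> last x p = y -> pweight w (x :: p) = l ->
  (forall u v, adj u v = t u v || pedge (x :: p) u v) ->
  (exists v, v \notin x :: p) ->
  (forall c, gcycle adj c -> cweight w c != 11) ->
  (forall q, gpath adj (x :: q) -> last x q = y ->
     all (fun v => v \in closed_nbhd adj (x :: p)) (x :: q) ->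
     l <= pweight w (x :: q)) ->
  ((l%:R / 3%:R + 5%:R / 3%:R : rat) <= (#|closed_nbhd adj (x :: p)|)%:R)%R.
Proof.
move=> hsym hirr wsym wval htree wt hgp hlast hl hF hns hcyc hmin.
have [tsym [tconn tacyc]] := htree.
set s := x :: p in hgp hl hF hns hcyc hmin *.
set N := closed_nbhd adj s in hmin *.
set k := size p.
have hsz : size s = k.+1 by [].
pose v i := nth x s i.
pose we i := w (v i) (v i.+1).
have tadj : forall u u', t u u' -> adj u u' by move=> u u' h; rewrite hF h.
move: hgp; rewrite /gpath => /andP[hpath hU].
have vin : forall i, i <= k -> v i \in s by move=> i hi; apply: mem_nth; rewrite hsz.
have vinj : forall i j, i <= k -> j <= k -> v i = v j -> i = j.
  by move=> i j hi hj /eqP; rewrite /v nth_uniq // => /eqP.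
have vidx : forall u, u \in s -> exists2 j, j <= k & u = v j.
  move=> u hu; exists (index u s); last by rewrite /v nth_index.
  by rewrite -ltnS -hsz index_mem.
have hadjP : forall i, i < k -> adj (v i) (v i.+1).
  by move=> i hi; move/(pathP x): hpath => /(_ i hi).
have we35 : forall i, i < k -> 3 <= we i <= 5.
  by move=> i hi; move: (wval _ _ (hadjP i hi)); rewrite !inE /we => /or3P[] /eqP ->.
have hl' : l = \sum_(0 <= i < k) we i by rewrite -hl (pw_nth _ w x).
have nbN : forall u z, u \in s -> adj u z -> z \in N.
  by move=> u z hu hz; rewrite inE; apply/hasP; exists u => //; rewrite hz orbT.
have sN : forall u, u \in s -> u \in N.
  by move=> u hu; rewrite inE; apply/hasP; exists u => //; rewrite eqxx.
have v0 : v 0 = x by [].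
have vk : v k = y by rewrite /v -hlast (last_nth x).
have SC : forall a b r, a < b -> b <= k -> uniq r -> all (fun z => z \notin s) r ->
    all (fun z => z \in N) r -> path adj (v a) (rcons r (v b)) ->
    \sum_(a <= i < b) we i <= pweight w (v a :: rcons r (v b)).
  move=> a b r hab hbk hur hrs hrN hrp.
  have ea : last x (take a p) = v a by rewrite last_take_nth //; lia.
  have eb : drop b s = v b :: drop b p by rewrite (drop_nth x) ?hsz.
  have pb : path adj (v b) (drop b p) by apply: drop_path_nth.
  have hq := hmin (take a p ++ r ++ drop b s).
  have hg : gpath adj (x :: (take a p ++ r ++ drop b s)).
    rewrite /gpath; apply/andP; split.
      rewrite cat_path take_path //= ea cat_path.
      move: hrp; rewrite rcons_path => /andP[-> hl2] /=.
      by rewrite eb /= hl2 pb.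
    have -> : x :: (take a p ++ r ++ drop b s) = take a.+1 s ++ r ++ drop b s by [].
    rewrite uniq_catCA cat_uniq hur andTb.
    have hsub : subseq (take a.+1 s ++ drop b s) s.
      rewrite -{3}(cat_take_drop a.+1 s); apply: cat_subseq; first exact: subseq_refl.
      have -> : b = (b - a.+1) + a.+1 by clear -hab; lia.
      by rewrite -drop_drop drop_subseq.
    rewrite (subseq_uniq hsub hU) andbT.
    apply/hasPn => u hu; apply/negP => hur'.
    move/allP: hrs => /(_ u hur'); move: (mem_subseq hsub hu) => ->; done.
  have hlq : last x (take a p ++ r ++ drop b s) = y.
    rewrite !last_cat eb /= -hlast -[in RHS](cat_take_drop b p) last_cat last_take_nth //.
  have hNq : all (fun v0 => v0 \in N) (x :: (take a p ++ r ++ drop b s)).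
    rewrite /= sN ?mem_head //= !all_cat hrN /=.
    apply/andP; split; apply/allP => u hu; apply: sN.
      by rewrite inE (mem_take hu) orbT.
    exact: (mem_drop hu).
  have := hq hg hlq hNq.
  rewrite pw_join ea eb -cat_rcons pw_join last_rcons.
  have e1 : pweight w (x :: take a p) = \sum_(0 <= i < a) we i.
    have -> : x :: take a p = take (a - 0).+1 (drop 0 s) by rewrite subn0.
    by rewrite (pw_range _ w x) // hsz; clear -hab hbk; lia.
  have e2 : pweight w (v b :: drop b p) = \sum_(b <= i < k) we i.
    have h1 : b <= k by [].
    have h2 : k < size s by rewrite hsz.
    rewrite -eb -(@pw_range _ w x s b k h1 h2).
    by rewrite take_oversize // size_drop hsz; clear -hbk; lia.
  rewrite e1 e2 hl' (big_cat_nat _ (n := a)) //=; last by clear -hab hbk; lia.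
  rewrite (big_cat_nat _ (n := b) (m := a) (p := k)) //=; last by clear -hab hbk; lia.
  move=> H; clear -H; lia.
have sum3 : forall m n, n <= k -> 3 * (n - m) <= \sum_(m <= i < n) we i.
  move=> m n hn; rewrite mulnC -sum_nat_const_nat big_nat_cond [X in _ <= X]big_nat_cond.
  apply: leq_sum => i /andP[/andP[_ hi] _].
  by have /andP[] := we35 i (leq_trans hi hn).
have F1 : forall i j, i <= k -> j <= k -> t (v i) (v j) -> (i.+1 = j) \/ (j.+1 = i).
  suff H : forall i j, i <= k -> j <= k -> t (v i) (v j) -> i < j -> i.+1 = j.
    move=> i j hi hj ht; case: (ltngtP i j) => hij.
    - by left; apply: H.
    - by right; apply: H => //; rewrite tsym.
    - by move: (hirr (v i)); rewrite {2}hij tadj.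
  move=> i j hi hj ht hij; apply/eqP; rewrite eqn_leq hij /=; apply/negP => hc.
  have := SC i j [::] hij hj erefl erefl erefl.
  rewrite /= tadj //= pw_cons2 pw_one wt // addn0 => h.
  have h3 := sum3 i j hj; move: (h erefl) h3 hc; clear; lia.
have F2 : forall z a b, z \notin s -> t z (v a) -> t z (v b) -> a < b -> b <= k ->
    \sum_(a <= i < b) we i <= 6.
  move=> z a b hz ha hb hab hbk.
  have haz : adj (v a) z by apply: tadj; rewrite tsym.
  have hak : a <= k by apply: leq_trans (ltnW hab) hbk.
  have := SC a b [:: z] hab hbk erefl.
  rewrite /= hz (nbN (v a)) ?vin //.
  rewrite haz (tadj z (v b) hb) !pw_cons2 pw_one (wt _ _ hb) (wsym (v a) z) (wt _ _ ha).
  by move=> h; apply: h.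
have F3 : forall z j, z \notin s -> t z (v j) -> t z (v j.+1) -> j < k -> we j != 5.
  move=> z j hz h1 h2 hj.
  have := hcyc [:: z; v j; v j.+1].
  rewrite /gcycle /cweight /= !pw_cons2 pw_one (wt _ _ h1) (wsym (v j.+1) z) (wt _ _ h2) addn0.
  have hv : v j != v j.+1 by apply/eqP => /vinj; move: hj; clear; lia.
  have hzj : z != v j by apply/eqP => e; move: hz; rewrite e vin //; apply: ltnW.
  have hzj1 : z != v j.+1 by apply/eqP => e; move: hz; rewrite e vin.
  rewrite !inE negb_or hzj hzj1 hv (tadj _ _ h1) (hadjP j hj) (tadj (v j.+1) z); last by rewrite tsym.
  move=> /(_ erefl); rewrite /we; clear; lia.
pose wit (c : nat) (jz : 'I_k.+1 * V) := [&& c <= jz.1, jz.2 \notin s, t jz.2 (v jz.1)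
   & [forall i : 'I_k, (c <= i < jz.1) ==> t (v i) (v i.+1)]].
have F4 : forall a, a <= k -> (a == 0) || ~~ t (v a.-1) (v a) -> [exists jz, wit a jz].
  move=> a hak ha; case: (boolP [exists jz, wit a jz]) => // /existsPn hno; exfalso.
  pose X := [set u | [exists j : 'I_k.+1, [&& u == v j, a <= j &
               [forall i : 'I_k, (a <= i < j) ==> t (v i) (v i.+1)]]]].
  have cl : forall u u', t u u' -> u \in X -> u' \in X.
    move=> u u' htu; rewrite !inE => /existsP [j /and3P[/eqP eu haj /forallP hall]].
    have hj : j <= k by rewrite -ltnS ltn_ord.
    case: (boolP (u' \in s)) => hu's; last first.
      move: (hno (j, u')); rewrite /wit /= haj hu's.
      rewrite tsym -eu htu /= => /negP H; exfalso; apply: H; apply/forallP => i; exact: hall.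
    have [j' hj' eu'] := vidx u' hu's.
    have hj'o : j' < k.+1 by [].
    case: (F1 j j' hj hj'); first by rewrite -eu -eu'.
    - move=> e; apply/existsP; exists (Ordinal hj'o); rewrite /= eu' eqxx /=.
      apply/andP; split; first by move: haj e; clear; lia.
      apply/forallP => i; apply/implyP => /andP[hai hij].
      case: (ltnP i j) => hij2.
        by move: (hall i); rewrite hai hij2.
      have ei : (i : nat) = j by move: hij hij2 e; clear; lia.
      by rewrite ei -eu e -eu'.
    - move=> e; case: (leqP a j') => haj'.
        apply/existsP; exists (Ordinal hj'o); rewrite /= eu' eqxx haj' /=.
        apply/forallP => i; apply/implyP => /andP[hai hij].
        by move: (hall i); rewrite hai /= (ltn_trans hij) // -e.
      have eaj : a = j by move: haj haj' e; clear; lia.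
      move: ha; rewrite eaj -e /= => /negP H; exfalso; apply: H.
      by move: htu; rewrite eu' eu -e tsym.
  have vaX : v a \in X.
    have hao : a < k.+1 by [].
    rewrite inE; apply/existsP; exists (Ordinal hao); rewrite /= eqxx leqnn /=.
    apply/forallP => i; apply/implyP => /andP[h1 h2]; move: h1 h2; clear; lia.
  have reach : forall u, u \in X.
    move=> u; have /connectP [q hq ->] := tconn (v a) u.
    elim: q (v a) vaX hq => [|b q IH] c hc //= /andP[hcb hq].
    exact: IH (cl _ _ hcb hc) hq.
  case: (posnP a) => ha0.
    case: hns => u hu; move: (reach u); rewrite inE => /existsP [j /and3P[/eqP eu _ _]].
    by move: hu; rewrite eu vin // -ltnS ltn_ord.
  move: (reach (v a.-1)); rewrite inE => /existsP [j /and3P[/eqP eu haj _]].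
  have hj : j <= k by rewrite -ltnS ltn_ord.
  have := vinj _ _ (leq_trans (leq_pred a) hak) hj eu.
  move: haj ha0; clear; lia.
have key : forall (c0 c : nat) (jz0 jzc : 'I_k.+1 * V), wit c0 jz0 -> wit c jzc ->
    jz0.2 = jzc.2 -> c0 < c -> 4 <= we c.-1 -> c.-1 < k -> c = (jz0.1).+1 /\ we c.-1 = 4.
  move=> c0 c [j0 z] [jc z'] /= /and4P[hc0 hz ht0 /forallP hall] /and4P[hcc _ htc _] ez hlt h4 hck.
  subst z'.
  have hj0 : j0 <= k by rewrite -ltnS ltn_ord.
  have hjc : jc <= k by rewrite -ltnS ltn_ord.
  case: c hcc hlt h4 hck => [|i] /= hcc hlt h4 hck //.
  move: htc => /= htc.
  have hi0 : j0 <= i.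
    rewrite leqNgt; apply/negP => hlt2.
    move: (hall (Ordinal hck)) => /=; rewrite hlt2 andbT.
    have -> : c0 <= i by move: hlt; clear; lia.
    move=> /= /wt; rewrite -/(we i) => e3; move: h4; rewrite e3.
    done.
  have hjj : j0 < jc by move: hi0 hcc; clear; rewrite /=; lia.
  have := F2 z j0 jc hz ht0 htc hjj hjc.
  rewrite (big_cat_nat _ (n := i)) //=; last by move: hcc; clear; lia.
  rewrite (big_cat_nat _ (n := i.+1) (m := i)) //=.
  rewrite big_nat1.
  have s1 := sum3 j0 i (ltnW hck).
  have s2 := sum3 i.+1 jc hjc.
  move=> hs.
  have ei : i = j0 by move: hs s1 s2 h4 hi0 hcc; clear; lia.
  have ejc : (jc : nat) = j0.+1 by move: hs s1 s2 h4 hi0 hcc; clear; lia.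
  split; first by rewrite ei.
  have := F3 z j0 hz ht0; rewrite -ejc => /(_ htc hjc); rewrite -ei.
  have := we35 _ hck; move: h4; clear; lia.
pose charge (c : 'I_k.+1) : nat := if (c : nat) == 0 then 2 else we c.-1 - 3.
pose pc (c : 'I_k.+1) := 0 < charge c.
pose phi (c : 'I_k.+1) := [pick jz | wit c jz].
pose zz (c : 'I_k.+1) := if phi c is Some jz then jz.2 else x.
pose M := N :\: [set u in s].
have hphi : forall c, pc c -> exists2 jz, phi c = Some jz & wit c jz.
  move=> c hc; rewrite /phi; case: pickP => [jz hjz|h0]; first by exists jz.
  have hck : c <= k by rewrite -ltnS ltn_ord.
  have := F4 c hck; case: eqP => [e0|hc0] /=.
    by move=> /(_ erefl) /existsP [jz]; move: (h0 jz) => /= ->.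
  have ec : (c : nat) = (c.-1).+1 by move: hc0; clear; lia.
  have hn : ~~ t (v c.-1) (v c).
    apply/negP => /wt; rewrite [in v c]ec -/(we c.-1) => e3.
    by move: hc; rewrite /pc /charge e3; case: eqP.
  by rewrite hn => /(_ erefl) /existsP [jz]; move: (h0 jz) => /= ->.
have charge2 : forall c, charge c <= 2.
  move=> c; rewrite /charge; case: eqP => // hc0.
  have hck : c.-1 < k by move: (ltn_ord c) hc0; clear; lia.
  by have := we35 _ hck; clear; lia.
have inner : forall z, \sum_(c | pc c && (zz c == z)) charge c <= 3.
  move=> z.
  case: (pickP (fun c => pc c && (zz c == z))) => [c1 hc1|h0]; last first.
    by rewrite big_pred0.
  case: (@arg_minnP _ c1 (fun c => pc c && (zz c == z)) (fun c : 'I_k.+1 => (c : nat)) hc1) => c0 /andP[pc0 /eqP ez0] hmin0.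
  have [jz0 hp0 hw0] := hphi c0 pc0.
  have ez0' : jz0.2 = z by move: ez0; rewrite /zz hp0.
  have hrest : forall c, pc c && (zz c == z) -> c != c0 ->
      (c : nat) = (jz0.1).+1 /\ charge c = 1.
    move=> c hcP hne; move: (hcP) => /andP[pcc /eqP ezc].
    have [jzc hpc hwc] := hphi c pcc.
    have ezc' : jzc.2 = z by move: ezc; rewrite /zz hpc.
    have hle := hmin0 c hcP.
    have hne' : (c : nat) != c0.
      apply/eqP => e; move/negP: hne; apply; apply/eqP; exact: val_inj.
    have hlt : (c0 : nat) < c by rewrite ltn_neqAle eq_sym hne' hle.
    have hc0 : (c : nat) != 0 by move: hlt; clear; lia.
    have hck : (c : nat).-1 < k by move: (ltn_ord c) hc0; clear; lia.
    have h4 : 4 <= we (c : nat).-1.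
      by move: pcc; rewrite /pc /charge (negbTE hc0); clear; lia.
    have [e1 e2] := key c0 c jz0 jzc hw0 hwc (etrans ez0' (esym ezc')) hlt h4 hck.
    split => //; rewrite /charge (negbTE hc0) e2 //.
  rewrite (bigD1 c0) /=; last by rewrite pc0 ez0 eqxx.
  case: (pickP (fun c => (pc c && (zz c == z)) && (c != c0))) => [c2 hc2|h1]; last first.
    rewrite big_pred0 // addn0; exact: leq_trans (charge2 c0) _.
  move/andP: hc2 => [hc2 hne2]; have [e2 ch2] := hrest c2 hc2 hne2.
  rewrite (bigD1 c2) /=; last by rewrite hc2 hne2.
  rewrite big1 ?addn0 ?ch2; last first.
    move=> c /andP[/andP[hc hne] hne2']; have [e ch] := hrest c hc hne.
    exfalso; move/negP: hne2'; apply; apply/eqP; apply: val_inj; by rewrite /= e e2.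
  by move: (charge2 c0); clear; lia.
have hM : forall c, pc c -> zz c \in M.
  move=> c hc; have [[j z] hp hw] := hphi c hc; rewrite /zz hp /=.
  move: hw => /and4P[_ hz ht _]; rewrite in_setD inE hz /=.
  apply: (nbN (v j)); first by apply: vin; rewrite -ltnS ltn_ord.
  by apply: tadj; rewrite tsym.
have htot : \sum_(c : 'I_k.+1 | pc c) charge c <= 3 * #|M|.
  rewrite (partition_big zz (fun z => z \in M)) //=.
  apply: (@leq_trans (\sum_(j in M) 3)); first by apply: leq_sum => z _; apply: inner.
  by rewrite sum_nat_const mulnC.
have hsumc : \sum_(c : 'I_k.+1 | pc c) charge c = 2 + \sum_(i < k) (we i - 3).
  rewrite big_mkcond big_ord_recl /=; congr (_ + _).
  apply: eq_bigr => i _; rewrite /pc /charge /=.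
  rewrite add0n; case: ifP => // /negbT; clear; lia.
have hlk : l = \sum_(i < k) (we i - 3) + 3 * k.
  rewrite hl' big_mkord (eq_bigr (fun i : 'I_k => (we i - 3) + 3)).
    by rewrite big_split /= sum_nat_const card_ord mulnC.
  move=> i _; rewrite subnK //; by have /andP[] := we35 i (ltn_ord i).
have hN : #|N| = k.+1 + #|M|.
  rewrite -(cardsID [set u in s] N); congr (_ + _).
  have -> : N :&: [set u in s] = [set u in s].
    apply/setIidPr; apply/subsetP => u; rewrite inE; exact: sN.
  by rewrite cardsE (card_uniqP hU) hsz.
have fin : l + 5 <= 3 * #|N| by move: htot; rewrite hsumc hN; move: hlk; clear; lia.
by rewrite -mulrDl -natrD ler_pdivrMr ?ltr0n // -natrM ler_nat mulnC.
Qed.
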